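(* The category $\mathsf{PreOrdGrp}$ of preordered groups is not subtractive.
   Context: A preordered group is a pair $(G,P_G)$ with $G$ an additively written group and $P_G\subseteq G$ a submonoid closed under conjugation; morphisms are group homomorphisms $f$ with $f(P_G)\subseteq P_H$. This is $\mathsf{PreOrdGrp}$, a pointed finitely complete category (limits computed componentwise, zero object the trivial group). A pointed finitely complete category is subtractive (in the sense of Z. Janelidze) if for every reflexive internal relation $R\rightarrowtail X\times X$ such that $\langle 1_X,0\rangle\colon X\to X\times X$ factors through $R$, also $\langle 0,1_X\rangle\colon X\to X\times X$ factors through $R$. *)

(* Defs.v *)
Set Implicit Arguments.

(* An (additively written, not necessarily abelian) group together with a
   positive cone P : a submonoid closed under conjugation. *)
Record PreOrdGrp : Type := {
  carrier :> Type;
  add : carrier -> carrier -> carrier;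
  zero : carrier;
  opp : carrier -> carrier;
  addA : forall x y z, add x (add y z) = add (add x y) z;
  add0x : forall x, add zero x = x;
  addx0 : forall x, add x zero = x;
  addNx : forall x, add (opp x) x = zero;
  addxN : forall x, add x (opp x) = zero;
  pos : carrier -> Prop;
  pos0 : pos zero;
  posD : forall p q, pos p -> pos q -> pos (add p q);
  posJ : forall g p, pos p -> pos (add (add g p) (opp g))
}.

Record Hom (G H : PreOrdGrp) : Type := {
  hfun :> G -> H;
  hadd : forall x y, hfun (add G x y) = add H (hfun x) (hfun y);
  hpos : forall p, pos G p -> pos H (hfun p)
}.

Definition hom_eq (G H : PreOrdGrp) (f g : Hom G H) : Prop :=
  forall x, f x = g x.

Definition comp (G H K : PreOrdGrp) (g : Hom H K) (f : Hom G H) : Hom G K.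
Proof.
  refine {| hfun := fun x => g (f x) |}.
  - intros x y. rewrite (hadd f), (hadd g). reflexivity.
  - intros p Hp. apply (hpos g), (hpos f), Hp.
Defined.

Definition id_hom (G : PreOrdGrp) : Hom G G.
Proof.
  refine {| hfun := fun x => x |}; auto.
Defined.

Lemma zero_hom_add (H : PreOrdGrp) : zero H = add H (zero H) (zero H).
Proof. rewrite add0x. reflexivity. Qed.

Definition zero_hom (G H : PreOrdGrp) : Hom G H.
Proof.
  refine {| hfun := fun _ => zero H |}.
  - intros; apply zero_hom_add.
  - intros; apply pos0.
Defined.

Definition prod_pog (G H : PreOrdGrp) : PreOrdGrp.
Proof.
  refine {| carrier := (G * H)%type;
            add := fun a b => (add G (fst a) (fst b), add H (snd a) (snd b));
            zero := (zero G, zero H);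
            opp := fun a => (opp G (fst a), opp H (snd a));
            pos := fun a => pos G (fst a) /\ pos H (snd a) |}.
  - intros [] [] []; simpl; rewrite !addA; reflexivity.
  - intros []; simpl; rewrite !add0x; reflexivity.
  - intros []; simpl; rewrite !addx0; reflexivity.
  - intros []; simpl; rewrite !addNx; reflexivity.
  - intros []; simpl; rewrite !addxN; reflexivity.
  - simpl; split; apply pos0.
  - intros [] [] [] []; simpl in *; split; apply posD; assumption.
  - intros [] [] []; simpl in *; split; apply posJ; assumption.
Defined.

Definition pair_hom (Z G H : PreOrdGrp) (f : Hom Z G) (g : Hom Z H)
  : Hom Z (prod_pog G H).
Proof.
  refine {| hfun := fun z => (f z, g z) : prod_pog G H |}.
  - intros x y; simpl; rewrite (hadd f), (hadd g); reflexivity.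
  - intros p Hp; simpl; split; [apply (hpos f) | apply (hpos g)]; exact Hp.
Defined.

Definition mono (A B : PreOrdGrp) (m : Hom A B) : Prop :=
  forall (Z : PreOrdGrp) (a b : Hom Z A),
    hom_eq (comp m a) (comp m b) -> hom_eq a b.

Definition factors_through (X R B : PreOrdGrp) (h : Hom X B) (m : Hom R B) : Prop :=
  exists d : Hom X R, hom_eq (comp m d) h.

(* Subtractivity (Z. Janelidze): for every reflexive internal relation
   m : R >-> X × X, if <1_X,0> factors through m then so does <0,1_X>. *)
Definition subtractive : Prop :=
  forall (X R : PreOrdGrp) (m : Hom R (prod_pog X X)),
    mono m ->
    factors_through (pair_hom (id_hom X) (id_hom X)) m ->
    factors_through (pair_hom (id_hom X) (zero_hom X X)) m ->
    factors_through (pair_hom (zero_hom X X) (id_hom X)) m.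

(* Main.v *)
Require Import Defs.
From Stdlib Require Import ZArith Lia.

Definition ZX : PreOrdGrp.
Proof.
  refine {| carrier := Z; add := Z.add; zero := 0%Z; opp := Z.opp;
            pos := fun z => (0 <= z)%Z |}; intros; lia.
Defined.

Definition ZR : PreOrdGrp.
Proof.
  refine {| carrier := (Z * Z)%type;
            add := fun a b => (fst a + fst b, snd a + snd b)%Z;
            zero := (0, 0)%Z;
            opp := fun a => (- fst a, - snd a)%Z;
            pos := fun a => (0 <= snd a <= fst a)%Z |};
  repeat intros [? ?]; simpl in *; try (f_equal; lia); lia.
Defined.

Definition mR : Hom ZR (prod_pog ZX ZX).
Proof.
  refine {| hfun := fun a : ZR => (a : prod_pog ZX ZX) |}.
  - intros [] []; reflexivity.
  - intros [] H; simpl in *; split; lia.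
Defined.

Definition dR (f : Z -> Z * Z) (Hf : forall x y, f (x + y)%Z = (fst (f x) + fst (f y), snd (f x) + snd (f y))%Z)
  (Hp : forall x, (0 <= x)%Z -> (0 <= snd (f x) <= fst (f x))%Z) : Hom ZX ZR.
Proof.
  refine {| hfun := f : ZX -> ZR |}; assumption.
Defined.

Theorem corollary3p10 : ~ subtractive.
Proof.
  intro S.
  assert (Hm : mono mR).
  { intros Z a b H x. apply (H x). }
  destruct (S ZX ZR mR Hm) as [d Hd].
  - exists (dR (fun x => (x, x)) (fun x y => eq_refl) (fun x H => conj H (Z.le_refl x))).
    intro x; reflexivity.
  - exists (dR (fun x => (x, 0%Z)) (fun x y => f_equal _ eq_refl) (fun x H => conj (Z.le_refl 0) H)).
    intro x; reflexivity.
  - pose proof (hpos d 1%Z ltac:(simpl; lia)) as P.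
    specialize (Hd 1%Z). simpl in Hd, P.
    destruct (d 1%Z) as [u v]. simpl in *. inversion Hd; subst. lia.
Qed.
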